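(* Let $l\ge 1$ and let $\alpha,\beta,a,b,\gamma_1,\dots,\gamma_l,c_1,\dots,c_l$ be constants. Let $W=I+\sum_{k\ge1}w_k\lambda^{-k}$, where the $w_k$ are $2\times2$ matrix-valued functions of the variables $t_1,t_2,\dots$ and $a_1,\dots,a_l$ that do not depend on $x$. Let $U=W\sigma_3W^{-1}=\sigma_3+\sum_{k\ge1}u_k\lambda^{-k}$, and define $$B_n=\sigma_3\lambda^n+\sum_{k=0}^{n-1}u_{n-k}\lambda^k\ (n\ge1),\qquad R_n=\gamma_nI+c_n\Big(\sigma_3+\sum_{j\ge1}a_n^{-j}u_j\Big),\qquad C_n=-\frac{R_n}{\lambda-a_n},\qquad S_n=-\frac{\gamma_nI+c_n\sigma_3}{\lambda-a_n}$$ for $n=1,\dots,l$. Suppose $W$ satisfies the Sato equations $$\partial_{t_n}W=B_nW-W\sigma_3\lambda^n\ (n\ge1),\qquad \partial_{a_n}W=C_nW-WS_n\ (n=1,\dots,l).$$ Let $\Psi(\lambda)=W\Psi_0(\lambda)$ with $$\Psi_0(\lambda)=\lambda^{\alpha}(\lambda-1)^{\beta}\prod_{n=1}^l(\lambda-a_n)^{\gamma_n}e^{x\lambda}\,\mathrm{diag}\Big(\lambda^{a}(\lambda-1)^{b}\prod_{n=1}^l(\lambda-a_n)^{c_n}e^{\sum_{n\ge1}t_n\lambda^n},\ \lambda^{-a}(\lambda-1)^{-b}\prod_{n=1}^l(\lambda-a_n)^{-c_n}e^{-\sum_{n\ge1}t_n\lambda^n}\Big).$$ Then $\partial_x\Psi=\lambda\Psi$,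 $\partial_{t_n}\Psi=B_n\Psi$ for all $n\ge1$, and $\partial_{a_n}\Psi=C_n\Psi$ for $n=1,\dots,l$.
   Context: $\sigma_3=\mathrm{diag}(1,-1)$, $I$ is the $2\times 2$ identity. $W^{-1}=\sum_{k\ge0}v_k\lambda^{-k}$ denotes the inverse series, so $u_k=\sum_{j=1}^k[w_j,\sigma_3]v_{k-j}$. $\lambda$ is a spectral parameter independent of all the variables $x,t_n,a_n$. *)

(* Defs.v *)
From Stdlib Require Import Reals.
From Coquelicot Require Import Coquelicot.
From mathcomp Require Import all_boot all_algebra.
From mathcomp Require Import Rstruct.

Set Implicit Arguments.
Unset Strict Implicit.
Unset Printing Implicit Defensive.
Import GRing.Theory.
Local Open Scope ring_scope.

Definition M2 := 'M[R]_2.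

Definition diag2 (d1 d2 : R) : M2 :=
  \matrix_(i < 2, j < 2) (if i == j then (if (i : nat) == 0%N then d1 else d2) else 0).
Definition sigma3 : M2 := diag2 1 (-1).

Definition mxSeries (f : nat -> M2) : M2 := \matrix_(i < 2, j < 2) Series (fun m => f m i j).

(* Coefficients of the inverse series W^{-1} = sum_k v_k lam^{-k}, where
   W = I + sum_{k>=1} w_k lam^{-k} (w 0 is ignored; w_0 = I).
   vrev w k = [:: v_k; v_{k-1}; ...; v_0]. *)
Fixpoint vrev (w : nat -> M2) (k : nat) : seq M2 :=
  match k with
  | 0 => [:: 1]
  | k'.+1 => let s := vrev w k' in
             (- \sum_(1 <= j < k'.+2) w j * nth 0 s j.-1) :: s
  end.
Definition vcoef (w : nat -> M2) (k : nat) : M2 := head 0 (vrev w k).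

(* u_k = sum_{j=1}^k [w_j, sigma3] v_{k-j}  (U = W sigma3 W^{-1} = sigma3 + sum u_k lam^{-k}) *)
Definition ucoef (w : nat -> M2) (k : nat) : M2 :=
  \sum_(1 <= j < k.+1) (w j * sigma3 - sigma3 * w j) * vcoef w (k - j).

Definition Wser (w : nat -> M2) (lam : R) : M2 :=
  1 + mxSeries (fun m => (lam ^-1) ^+ m.+1 *: w m.+1).

Definition Bn (n : nat) (w : nat -> M2) (lam : R) : M2 :=
  lam ^+ n *: sigma3 + \sum_(0 <= k < n) lam ^+ k *: ucoef w (n - k).

Definition Rn (gn cn an : R) (w : nat -> M2) : M2 :=
  gn%:M + cn *: (sigma3 + mxSeries (fun m => (an ^-1) ^+ m.+1 *: ucoef w m.+1)).

Definition Cn (gn cn an : R) (w : nat -> M2) (lam : R) : M2 :=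
  - ((lam - an) ^-1 *: Rn gn cn an w).
Definition Sn (gn cn an lam : R) : M2 :=
  - ((lam - an) ^-1 *: (gn%:M + cn *: sigma3)).

Definition wAt (l : nat) (w : nat -> (nat -> R) -> ('I_l -> R) -> M2)
  (t : nat -> R) (a : 'I_l -> R) : nat -> M2 := fun k => w k t a.

Definition updt (t : nat -> R) (n : nat) (s : R) : nat -> R :=
  fun m => if m == n then s else t m.
Definition upda (l : nat) (a : 'I_l -> R) (n : 'I_l) (s : R) : 'I_l -> R :=
  fun m => if m == n then s else a m.

Definition mx_derive (F : R -> M2) (s : R) (M : M2) : Prop :=
  forall i j : 'I_2, is_derive (fun y => F y i j) s (M i j).

Definition dom (l : nat) (a : 'I_l -> R) (lam : R) : Prop :=
  Rlt 1 lam /\ forall n : 'I_l, Rlt (a n) lam /\ a n <> 0%R.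

Definition Psi0 (l : nat) (alpha beta aa bb : R) (gamma c : 'I_l -> R)
  (x : R) (t : nat -> R) (a : 'I_l -> R) (lam : R) : M2 :=
  let xi := Series (fun k => t k.+1 * lam ^+ k.+1) in
  (Rpower lam alpha * Rpower (lam - 1) beta
     * \prod_(n < l) Rpower (lam - a n) (gamma n) * exp (x * lam))
  *: diag2 (Rpower lam aa * Rpower (lam - 1) bb
              * \prod_(n < l) Rpower (lam - a n) (c n) * exp xi)
           (Rpower lam (- aa) * Rpower (lam - 1) (- bb)
              * \prod_(n < l) Rpower (lam - a n) (- c n) * exp (- xi)).

Definition Psi (l : nat) (alpha beta aa bb : R) (gamma c : 'I_l -> R)
  (w : nat -> (nat -> R) -> ('I_l -> R) -> M2)
  (x : R) (t : nat -> R) (a : 'I_l -> R) (lam : R) : M2 :=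
  Wser (wAt w t a) lam * Psi0 alpha beta aa bb gamma c x t a lam.

(* Main.v *)
Require Import Defs.
From Stdlib Require Import Reals Lra Lia FunctionalExtensionality.
From Coquelicot Require Import Coquelicot.
From mathcomp Require Import all_boot all_algebra.
From mathcomp Require Import Rstruct.
Import GRing.Theory.

Local Open Scope R_scope.
Ltac req := match goal with |- ?a = ?b => change (@eq R a b) end;
  repeat match goal with |- context [@Algebra.zero ?T] => change (@Algebra.zero T) with R0 end;
  repeat match goal with |- context [@Algebra.opp ?T] => change (@Algebra.opp T) with Ropp end;
  repeat match goal with |- context [@Algebra.add ?T] => change (@Algebra.add T) with Rplus end.
Lemma series_change (u v : nat -> R) (m : nat) :
  ex_series u -> (forall k, k <> m -> v k = u k) ->
  Series v = (Series u + (v m - u m)).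
Proof.
move=> [L HL] Hk.
rewrite (is_series_unique u L HL).
apply: is_series_unique.
have Hs : forall k : nat, (k < m)%coq_nat -> v k = u k.
  by move=> k hk; apply: Hk; lia.
have Es : (sum_n v m = sum_n u m + (v m - u m)).
  destruct m as [|m'].
    rewrite !sum_O. req; ring.
  rewrite !sum_Sn (sum_n_ext_loc v u m').
    rewrite /plus /=; req; ring.
  move=> k hk; apply: Hs. lia.
have Ht : is_series (fun k => u (m.+1 + k)%coq_nat) (L - sum_n u m).
  apply: (is_series_incr_n u m.+1); first lia.
  simpl. rewrite /plus /=. by have -> : (L - sum_n u m + sum_n u m = L :> R) by ring.
apply: (is_series_decr_n v m.+1); first lia.
simpl.
apply: (is_series_ext (fun k => u (m.+1 + k)%coq_nat)).
  move=> k; symmetry; apply: Hk; lia.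
rewrite /plus /opp /=. rewrite Es.
by have -> : (L + (v m - u m) + - (sum_n u m + (v m - u m)) = L - sum_n u m :> R) by ring.
Qed.
Local Close Scope R_scope.
Local Open Scope ring_scope.

Lemma mulRE (x y : R) : x * y = Rmult x y. Proof. by []. Qed.
Lemma addRE (x y : R) : x + y = Rplus x y. Proof. by []. Qed.
Lemma oppRE (x : R) : - x = Ropp x. Proof. by []. Qed.
Lemma invRE (x : R) : x^-1 = Rinv x. Proof. by []. Qed.
Lemma zeroRE : (0 : R) = R0. Proof. by []. Qed.
Lemma oneRE : (1 : R) = R1. Proof. by []. Qed.

Lemma xi_upd (t : nat -> R) (n : nat) (lam s : R) : (0 < n)%N ->
  ex_series (fun k => (t k.+1 * lam ^+ k.+1)) ->
  Series (fun k => (updt t n s k.+1 * lam ^+ k.+1)) =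
  Rplus (Series (fun k => (t k.+1 * lam ^+ k.+1))) (Rmult (Rminus s (t n)) (lam ^+ n)).
Proof.
move=> n0 hs.
rewrite (series_change _ _ n.-1 hs); last first.
  move=> k hk; rewrite /updt.
  case: eqP => // e; exfalso; apply: hk; lia.
rewrite /updt prednK // eqxx.
rewrite !mulRE. ring.
Qed.

Lemma is_derive_eqv (f : R -> R) x l l' : is_derive f x l -> l = l' -> is_derive f x l'.
Proof. by move=> h <-. Qed.

Lemma mx_derive_eqv F s M M' : mx_derive F s M -> M = M' -> mx_derive F s M'.
Proof. by move=> h <-. Qed.

Lemma mul2E (A B : M2) i j : (A * B) i j = Rplus (Rmult (A i 0) (B 0 j)) (Rmult (A i 1) (B 1 j)).
Proof.
rewrite !mxE big_ord_recl big_ord1 /=.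
have -> : (lift ord0 ord0 : 'I_2) = 1 by apply: val_inj.
by have -> : (ord0 : 'I_2) = 0 by apply: val_inj.
Qed.

Lemma mx_derive_mul F G s0 F' G' : mx_derive F s0 F' -> mx_derive G s0 G' ->
  mx_derive (fun s => F s * G s) s0 (F' * G s0 + F s0 * G').
Proof.
move=> hF hG i j.
apply: (is_derive_ext (fun s => Rplus (Rmult (F s i 0) (G s 0 j)) (Rmult (F s i 1) (G s 1 j)))).
  by move=> s; rewrite mul2E.
apply: is_derive_eqv.
  apply: is_derive_plus; (apply: is_derive_mult; [apply: hF | apply: hG | move=> *; apply: Rmult_comm]).
rewrite mxE !mul2E /plus /mult /=. rewrite addRE. req; ring.
Qed.

Lemma ord2P (i : 'I_2) : i = 0 \/ i = 1.
Proof.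
case: i => [[|[|k]] hk]; [left|right|]; try by apply: val_inj.
by [].
Qed.

Lemma diag2E d1 d2 (i j : 'I_2) : diag2 d1 d2 i j =
  if i == j then (if (i : nat) == 0%N then d1 else d2) else 0.
Proof. by rewrite mxE. Qed.

Lemma mx_derive_const (A : M2) s : mx_derive (fun _ => A) s 0.
Proof. move=> i j; rewrite mxE; apply: is_derive_const. Qed.

Lemma mx_derive_sdiag (f d1 d2 : R -> R) s0 kf k1 k2 :
  is_derive f s0 (Rmult kf (f s0)) -> is_derive d1 s0 (Rmult k1 (d1 s0)) ->
  is_derive d2 s0 (Rmult k2 (d2 s0)) ->
  mx_derive (fun s => f s *: diag2 (d1 s) (d2 s)) s0
    (diag2 (Rplus kf k1) (Rplus kf k2) * (f s0 *: diag2 (d1 s0) (d2 s0))).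
Proof.
move=> hf h1 h2 i j.
apply: (is_derive_ext (fun s => Rmult (f s) (if i == j then (if (i : nat) == 0%N then d1 s else d2 s) else 0))).
  by move=> s; rewrite [in RHS]mxE diag2E.
rewrite mul2E !mxE.
case: (ord2P i) => ->; case: (ord2P j) => -> /=.
- apply: is_derive_eqv.
    apply: is_derive_mult; [apply: hf | apply: h1 | move=> *; apply: Rmult_comm].
  rewrite /plus /mult /=. rewrite ?mulRE ?addRE ?zeroRE. req. ring.
- apply: is_derive_eqv.
    apply: (is_derive_ext (fun _ => R0)); first by move=> s; req; ring.
    apply: is_derive_const.
  rewrite ?mulRE ?addRE ?zeroRE /zero /=. req; ring.
- apply: is_derive_eqv.
    apply: (is_derive_ext (fun _ => R0)); first by move=> s; req; ring.
    apply: is_derive_const.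
  rewrite ?mulRE ?addRE ?zeroRE /zero /=. req; ring.
- apply: is_derive_eqv.
    apply: is_derive_mult; [apply: hf | apply: h2 | move=> *; apply: Rmult_comm].
  rewrite /plus /mult /=. rewrite ?mulRE ?addRE ?zeroRE. req; ring.
Qed.

Lemma diag2_eqP (A : M2) a b : A 0 0 = a -> A 1 1 = b -> A 0 1 = 0 -> A 1 0 = 0 ->
  diag2 a b = A.
Proof.
move=> h00 h11 h01 h10; apply/matrixP => i j; rewrite diag2E.
by case: (ord2P i) => ->; case: (ord2P j) => -> /=.
Qed.

Lemma Rpower_derive (g lam s0 : R) : Rlt s0 lam ->
  is_derive (fun s => Rpower (lam - s) g) s0
    (Rmult (Rdiv (Ropp g) (Rminus lam s0)) (Rpower (lam - s0) g)).
Proof.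
move=> h. rewrite /Rpower.
have h' : Rlt 0 (Rminus lam s0) by lra.
auto_derive.
  change (lam - s0) with (Rminus lam s0). lra.
unfold Rminus, Rdiv. field. lra.
Qed.

Lemma prod_upd_derive l (g : 'I_l -> R) (a : 'I_l -> R) n lam : Rlt (a n) lam ->
  is_derive (fun s => \prod_(m < l) Rpower (lam - upda a n s m) (g m)) (a n)
   (Rmult (Rdiv (Ropp (g n)) (Rminus lam (a n))) (\prod_(m < l) Rpower (lam - a m) (g m))).
Proof.
move=> h.
set K := \prod_(m < l | m != n) Rpower (lam - a m) (g m).
apply: (is_derive_ext (fun s => Rmult K (Rpower (lam - s) (g n)))).
  move=> s; rewrite (bigD1 n) //= /upda eqxx mulRE Rmult_comm; congr Rmult.
  by apply: eq_bigr => m /negbTE ->.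
apply: is_derive_eqv; first by apply: is_derive_scal; apply: Rpower_derive.
rewrite [in RHS](bigD1 n) //= -/K mulRE. ring.
Qed.

Lemma is_derive_mid (A E : R) (p : R -> R) s0 dp : is_derive p s0 dp ->
  is_derive (fun s => A * p s * E) s0 (A * dp * E).
Proof.
move=> h.
apply: (is_derive_ext (fun s => Rmult (Rmult A (p s)) E)); first by [].
apply: (is_derive_ext (fun s => Rmult (Rmult A E) (p s))).
  by move=> s; req; ring.
apply: is_derive_eqv; first exact: (is_derive_scal p s0 (Rmult A E) dp h).
rewrite !mulRE; req; ring.
Qed.

Lemma mx_derive_sdiag' (P : R -> M2) (f d1 d2 : R -> R) s0 kf k1 k2 :
  (forall s, P s = f s *: diag2 (d1 s) (d2 s)) ->
  is_derive f s0 (Rmult kf (f s0)) -> is_derive d1 s0 (Rmult k1 (d1 s0)) ->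
  is_derive d2 s0 (Rmult k2 (d2 s0)) ->
  mx_derive P s0 (diag2 (Rplus kf k1) (Rplus kf k2) * P s0).
Proof.
move=> hP hf h1 h2 i j.
apply: (is_derive_ext (fun s => (f s *: diag2 (d1 s) (d2 s)) i j)).
  by move=> s; rewrite hP.
rewrite hP; exact: mx_derive_sdiag.
Qed.

Lemma is_derive_cst0 (d : R -> R) s0 : (forall s, d s = d s0) -> is_derive d s0 (Rmult R0 (d s0)).
Proof.
move=> h; apply: (is_derive_ext (fun _ => d s0)); first by move=> s; rewrite h.
apply: is_derive_eqv; first exact: is_derive_const.
rewrite /zero /=; ring.
Qed.

Lemma fin_alg (W B K P : M2) : (B * W - W * K) * P + W * (K * P) = B * (W * P).
Proof. by rewrite mulrBl -!mulrA subrK. Qed.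

Theorem theorem2p3 (l : nat) (hl : (1 <= l)%N) (alpha beta aa bb : R)
  (gamma c : 'I_l -> R)
  (w : nat -> (nat -> R) -> ('I_l -> R) -> M2)
  (Sato_t : forall (n : nat) (t : nat -> R) (a : 'I_l -> R) (lam : R),
     (1 <= n)%N -> dom a lam ->
     mx_derive (fun s => Wser (wAt w (updt t n s) a) lam) (t n)
       (Bn n (wAt w t a) lam * Wser (wAt w t a) lam
        - Wser (wAt w t a) lam * (lam ^+ n *: sigma3)))
  (Sato_a : forall (n : 'I_l) (t : nat -> R) (a : 'I_l -> R) (lam : R),
     dom a lam ->
     mx_derive (fun s => Wser (wAt w t (upda a n s)) lam) (a n)
       (Cn (gamma n) (c n) (a n) (wAt w t a) lam * Wser (wAt w t a) lam
        - Wser (wAt w t a) lam * Sn (gamma n) (c n) (a n) lam)) :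
  forall (x : R) (t : nat -> R) (a : 'I_l -> R) (lam : R),
    dom a lam -> ex_series (fun k => t k.+1 * lam ^+ k.+1) ->
    [/\ mx_derive (fun s => Psi alpha beta aa bb gamma c w s t a lam) x
          (lam *: Psi alpha beta aa bb gamma c w x t a lam),
        forall n : nat, (1 <= n)%N ->
          mx_derive (fun s => Psi alpha beta aa bb gamma c w x (updt t n s) a lam) (t n)
            (Bn n (wAt w t a) lam * Psi alpha beta aa bb gamma c w x t a lam)
      & forall n : 'I_l,
          mx_derive (fun s => Psi alpha beta aa bb gamma c w x t (upda a n s) lam) (a n)
            (Cn (gamma n) (c n) (a n) (wAt w t a) lam
             * Psi alpha beta aa bb gamma c w x t a lam)].
Proof.
move=> x t a lam hdom hser.
have eqt : forall n, updt t n (t n) = t.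
  move=> n; apply: functional_extensionality => m; rewrite /updt; by case: eqP => // ->.
have eqa : forall n, upda a n (a n) = a.
  move=> n; apply: functional_extensionality => m; rewrite /upda; by case: eqP => // ->.
have hlt : forall n, Rlt (a n) lam by move=> n; case: (proj2 hdom n).
split.
- rewrite /Psi.
  apply: mx_derive_eqv.
    apply: mx_derive_mul; first exact: mx_derive_const.
    apply: (@mx_derive_sdiag' _ _ _ _ x lam R0 R0).
    + move=> s; reflexivity.
    + rewrite /=.
      have he : is_derive (fun s => exp (Rmult s lam)) x (Rmult lam (exp (Rmult x lam))).
        auto_derive; first done. req; ring.
      apply: is_derive_eqv; first exact: (is_derive_scal _ _ _ _ he).
      rewrite /= ?mulRE. req; ring.
    + by apply: is_derive_cst0.
    + by apply: is_derive_cst0.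
  rewrite /= mul0r add0r.
  have -> : diag2 (lam + R0) (lam + R0) = lam%:A.
    by apply: diag2_eqP; rewrite !mxE /= ?mulr1 ?mulr0 //; req; ring.
  by rewrite mulr_algl scalerAr.
- move=> n hn; rewrite /Psi.
  apply: mx_derive_eqv.
    apply: mx_derive_mul; first exact: (Sato_t n t a lam hn hdom).
    apply: (@mx_derive_sdiag' _ _ _ _ (t n) R0 (lam ^+ n) (Ropp (lam ^+ n))).
    + move=> s; reflexivity.
    + by apply: is_derive_cst0.
    + rewrite /=.
      have hx : is_derive (fun s => exp (Series (fun k => updt t n s k.+1 * lam ^+ k.+1))) (t n)
         (Rmult (lam ^+ n) (exp (Series (fun k => updt t n (t n) k.+1 * lam ^+ k.+1)))).
        apply: (is_derive_ext (fun s => exp (Rplus (Series (fun k => t k.+1 * lam ^+ k.+1)) (Rmult (Rminus s (t n)) (lam ^+ n))))).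
          by move=> s; rewrite xi_upd.
        rewrite eqt. auto_derive; first done. rewrite Rplus_opp_r Rmult_0_l Rplus_0_r; req; ring.
      apply: is_derive_eqv; first exact: (is_derive_scal _ _ _ _ hx).
      rewrite /= ?mulRE. req; ring.
    + rewrite /=.
      have hx : is_derive (fun s => exp (- Series (fun k => updt t n s k.+1 * lam ^+ k.+1))) (t n)
         (Rmult (Ropp (lam ^+ n)) (exp (- Series (fun k => updt t n (t n) k.+1 * lam ^+ k.+1)))).
        apply: (is_derive_ext (fun s => exp (Ropp (Rplus (Series (fun k => t k.+1 * lam ^+ k.+1)) (Rmult (Rminus s (t n)) (lam ^+ n)))))).
          by move=> s; rewrite xi_upd.
        rewrite eqt. auto_derive; first done. rewrite Rplus_opp_r Rmult_0_l Rplus_0_r; req; ring.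
      apply: is_derive_eqv; first exact: (is_derive_scal _ _ _ _ hx).
      rewrite /= ?mulRE. req; ring.
  rewrite /= eqt.
  have -> : diag2 (R0 + lam ^+ n) (R0 + Ropp (lam ^+ n)) = lam ^+ n *: sigma3.
    apply: diag2_eqP; rewrite /sigma3 !mxE /= ?mulr1 ?mulr0 ?mulrN1 //; rewrite ?oppRE; req; by rewrite Rplus_0_l.
  exact: fin_alg.
- move=> n; rewrite /Psi.
  have hn := hlt n.
  apply: mx_derive_eqv.
    apply: mx_derive_mul; first exact: (Sato_a n t a lam hdom).
    apply: (@mx_derive_sdiag' _ _ _ _ (a n) (Rdiv (Ropp (gamma n)) (Rminus lam (a n)))
       (Rdiv (Ropp (c n)) (Rminus lam (a n))) (Rdiv (Ropp (- c n)) (Rminus lam (a n)))).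
    + move=> s; reflexivity.
    + rewrite /= eqa.
      have hp := @prod_upd_derive l gamma a n lam (hlt n).
      apply: is_derive_eqv; first exact: (is_derive_mid _ _ _ _ _ hp).
      rewrite /= ?mulRE; req; ring.
    + rewrite /= eqa.
      have hp := @prod_upd_derive l c a n lam (hlt n).
      apply: is_derive_eqv; first exact: (is_derive_mid _ _ _ _ _ hp).
      rewrite /= ?mulRE; req; ring.
    + rewrite /= eqa.
      have hp := @prod_upd_derive l (fun m => - c m) a n lam (hlt n).
      apply: is_derive_eqv; first exact: (is_derive_mid _ _ _ _ _ hp).
      rewrite /= ?mulRE; req; ring.
  rewrite /= eqa.
  have -> : diag2 (Rdiv (Ropp (gamma n)) (Rminus lam (a n)) + Rdiv (Ropp (c n)) (Rminus lam (a n)))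
                  (Rdiv (Ropp (gamma n)) (Rminus lam (a n)) + Rdiv (Ropp (- c n)) (Rminus lam (a n)))
            = Sn (gamma n) (c n) (a n) lam.
    apply: diag2_eqP; rewrite /Sn /sigma3 !mxE /= ?mulr1n ?mulr0n ?mulr1 ?mulr0 ?mulrN1 //; req;
      rewrite ?oppRE ?mulRE ?invRE ?addRE; unfold Rminus, Rdiv; field; lra.
  exact: fin_alg.
Qed.
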